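(* Let $\mathbf{S}=(S_n)_{n\in\mathbb{N}}$ be a stationary ergodic information source with finite (totally ordered) alphabet $A$. Then the permutation entropy rate \[ h_m^{*}(\mathbf{S})=\lim_{L\to\infty}\frac{1}{L-1}H_m(R_1^L) \] exists and equals the metric entropy rate $h_m(\mathbf{S})=\lim_{L\to\infty}\frac{1}{L}H_m(S_1^L)$.
   Context: A finite-alphabet information source is a discrete-time stochastic process $\mathbf{S}=(S_n)_{n\in\mathbb{N}}$ with values in a finite totally ordered alphabet $A$; stationarity and ergodicity refer to its sequence-space model $(A^{\mathbb{N}},\mathcal{Z},m,\sigma)$, where $m$ is the induced shift-invariant distribution on output sequences and $\sigma$ the left shift. The rank variables are $R_n=\sum_{i=1}^{n}\delta(S_i\le S_n)$, $n\ge1$, where $\delta(P)=1$ if the proposition $P$ holds and $0$ otherwise; $R_1^L=R_1\cdots R_L$ and $S_1^L=S_1\cdots S_L$. $H_m(Z)=-\sum_z\Pr(z)\log_2\Pr(z)$ is the Shannon entropy of a discrete random variable (or word) $Z$. The quantity $\frac{1}{L-1}H_m(R_1^L)$ is the permutation entropy of order $L\ge 2$, equivalently the entropy of the distribution of order patterns (permutations) of the block $S_1^L$ divided by $L-1$. *)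

(* Defs.v *)
From HB Require Import structures.
From mathcomp Require Import all_boot all_order all_algebra.
From mathcomp Require Import all_classical all_reals all_analysis.
Set Implicit Arguments. Unset Strict Implicit. Unset Printing Implicit Defensive.
Import Order.TTheory GRing.Theory Num.Theory.
Local Open Scope classical_set_scope.
Local Open Scope ring_scope.

(* Binary logarithm (ln 0 = 0 in MathComp-Analysis, so 0 * log2 0 = 0). *)
Definition log2 {R : realType} (x : R) : R := ln x / ln 2.

Definition entropy {R : realType} {d} {Omega : measurableType d}
  (P : probability Omega R) {T : finType} (X : Omega -> T) : R :=
  - \sum_(t : T) (fine (P (X @^-1` [set t])) * log2 (fine (P (X @^-1` [set t])))).

Definition cylinders (A : Type) : set (set (nat -> A)) :=
  [set C | exists (L : nat) (w : 'I_L -> A), C = [set x : nat -> A | forall i : 'I_L, x i = w i]].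

Definition seq_measurable (A : Type) : set (set (nat -> A)) := <<s (@cylinders A) >>.

Definition shift (A : Type) (x : nat -> A) : nat -> A := fun n => x n.+1.

(* Sample path of the process (0-indexed: S 0 is S_1 of the paper). *)
Definition path_of {Omega A : Type} (S : nat -> Omega -> A) (w : Omega) : nat -> A :=
  fun n => S n w.

(* Measurability of each S_n (A carries the discrete sigma-algebra). *)
Definition is_source {d} {Omega : measurableType d}
  (A : finType) (S : nat -> Omega -> A) : Prop :=
  forall n (a : A), measurable (S n @^-1` [set a]).

(* Stationarity: the induced distribution m on A^N is shift-invariant,
   m (sigma^-1 B) = m B for all B in Z. *)
Definition stationary {R : realType} {d} {Omega : measurableType d}
  (P : probability Omega R) (A : Type) (S : nat -> Omega -> A) : Prop :=
  forall B : set (nat -> A), seq_measurable B ->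
    P [set w | B (shift (path_of S w))] = P [set w | B (path_of S w)].

Definition ergodic {R : realType} {d} {Omega : measurableType d}
  (P : probability Omega R) (A : Type) (S : nat -> Omega -> A) : Prop :=
  forall B : set (nat -> A), seq_measurable B ->
    (@shift A @^-1` B = B) ->
    P [set w | B (path_of S w)] = 0%E \/ P [set w | B (path_of S w)] = 1%E.

(* Rank variables, 0-indexed: rank S k w = R_{k+1}
   = #{ i in {1..k+1} : S_i <= S_{k+1} }. *)
Definition rank {disp} {A : finOrderType disp} {Omega : Type}
  (S : nat -> Omega -> A) (k : nat) (w : Omega) : nat :=
  #|[set i : 'I_k.+1 | (S i w <= S k w)%O]|.

(* The rank word R_1^L (ranks are <= L, hence fit in 'I_L.+1). *)
Definition rank_word {disp} {A : finOrderType disp} {Omega : Type}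
  (S : nat -> Omega -> A) (L : nat) (w : Omega) : {ffun 'I_L -> 'I_L.+1} :=
  [ffun i : 'I_L => inord (rank S i w)].

Definition sym_word {A : finType} {Omega : Type}
  (S : nat -> Omega -> A) (L : nat) (w : Omega) : {ffun 'I_L -> A} :=
  [ffun i : 'I_L => S i w].

(* Main.v *)
Require Import Defs.
From HB Require Import structures.
From mathcomp Require Import all_boot all_order all_algebra.
From mathcomp Require Import all_classical all_reals all_analysis.
From mathcomp Require Import lra ring zify.
Import Order.TTheory GRing.Theory Num.Theory numFieldNormedType.Exports.
Local Open Scope classical_set_scope.
Local Open Scope ring_scope.

Section Analysis.
Context {R : realType}.

Lemma cvg_eps (f : nat -> R) (h : R) :
  (forall e : R, 0 < e -> exists N : nat, forall n, (N <= n)%N -> `|f n - h| <= e) ->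
  f @ \oo --> h.
Proof.
move=> H; apply/cvgrPdist_le => e e0.
have [N HN] := H e e0.
exists N => // n /= Nn; rewrite distrC; exact: HN.
Qed.

Lemma fekete (u : nat -> R) :
  (forall n, 0 <= u n) -> (forall m n, u (m + n)%N <= u m + u n) ->
  exists h : R, (forall n, h <= u n.+1 / n.+1%:R) /\
    forall e : R, 0 < e -> exists N : nat, forall n, (N <= n)%N ->
      u n.+1 / n.+1%:R <= h + e.
Proof.
move=> u0 usub.
pose E := [set x | exists n, x = u n.+1 / n.+1%:R].
have hE : has_inf E.
  split; first by exists (u 1 / 1%:R); exists 0%N.
  exists 0 => x [n ->]; apply: divr_ge0 => //.
exists (inf E); split.
  move=> n; apply: (ge_inf hE.2); by exists n.
move=> e e0.
have e20 : 0 < e / 2 by apply: divr_gt0.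
have [x [m ->] Hm] := inf_adherent e20 hE.
pose C := \sum_(r < m.+1) u r.
have Cge : forall r, (r < m.+1)%N -> u r <= C.
  move=> r rm; rewrite /C (bigD1 (Ordinal rm)) //= lerDl.
  by apply: sumr_ge0 => i _.
have C0 : 0 <= C by apply: sumr_ge0.
have key : forall q r, u (q * m.+1 + r)%N <= u r + q%:R * u m.+1.
  elim=> [|q IH] r; first by rewrite mul0n add0n mul0r addr0.
  rewrite mulSn -addnA (le_trans (usub _ _)) //.
  rewrite (le_trans (lerD (lexx _) (IH r))) //.
  rewrite mulrSr mulrDl mul1r; lra.
pose N := Num.Def.archi_bound (C / (e / 2)).
exists N => n Nn.
have n0 : 0 < n.+1%:R :> R by rewrite ltr0n.
rewrite ler_pdivrMr //.
have := key (n.+1 %/ m.+1)%N (n.+1 %% m.+1)%N.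
rewrite -divn_eq => H1.
apply: (le_trans H1).
have H2 : u (n.+1 %% m.+1)%N <= C by apply: Cge; rewrite ltn_mod.
have H3 : (n.+1 %/ m.+1)%N%:R * u m.+1 <= n.+1%:R * (u m.+1 / m.+1%:R).
  have m0 : 0 < m.+1%:R :> R by rewrite ltr0n.
  rewrite mulrA ler_pdivlMr // -mulrA [u _ * _]mulrC mulrA.
  apply: ler_wpM2r => //.
  by rewrite -natrM ler_nat leq_trunc_div.
have H4 : C <= n.+1%:R * (e / 2).
  rewrite -ler_pdivrMr //.
  apply: (le_trans (ltW (archi_boundP _))); first by apply: divr_ge0 => //; exact: ltW.
  rewrite ler_nat; exact: leqW.
rewrite (le_trans (lerD H2 H3)) //.
have H5 : n.+1%:R * (u m.+1 / m.+1%:R) <= n.+1%:R * (inf E + e/2).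
  by apply: ler_wpM2l; [exact: ltW| exact: ltW].
rewrite [X in _ <= X]mulrC.
have -> : inf E + e = (inf E + e/2) + e/2 by rewrite -addrA -splitr.
by rewrite mulrDr addrC; apply: lerD.
Qed.

End Analysis.

Section Analysis.
Context {R : realType}.

Lemma ln_le_lin {x M : R} : 0 < x -> 0 < M -> ln x <= ln M + x / M.
Proof.
move=> x0 M0.
have h : -1 < x / M - 1 by rewrite ltrBrDr addrC subrr divr_gt0.
have := le_ln1Dx h; rewrite addrC subrK ln_div ?posrE //.
move=> H; lra.
Qed.

Lemma ln_small (c e : R) : 0 <= c -> 0 < e ->
  exists N : nat, forall n, (N <= n)%N -> c * ln (n.+3%:R) <= e * n.+1%:R.
Proof.
move=> c0 e0.
pose M := 2 * c / e + 1.
have M1 : 1 <= M by rewrite lerDr; apply: divr_ge0 => //; [lra|exact: ltW].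
have M0 : 0 < M by lra.
have lnM0 : 0 <= ln M by exact: ln_ge0.
pose N := (Num.Def.archi_bound (2 * c * ln M / e)).+1.
exists N => n Nn.
have x0 : 0 < n.+3%:R :> R by rewrite ltr0n.
have H1 := ln_le_lin x0 M0.
have H2 : c * ln n.+3%:R <= c * ln M + c * (n.+3%:R / M) by rewrite -mulrDr ler_wpM2l.
have HcM : c / M <= e / 2.
  rewrite ler_pdivrMr //.
  have -> : e / 2 * M = c + e / 2 by rewrite /M; field; lra.
  lra.
have H3 : c * (n.+3%:R / M) <= e / 2 * n.+3%:R.
  by rewrite mulrA mulrAC; apply: ler_wpM2r => //; rewrite ler0n.
have H4 : 2 * c * ln M / e < (n.+1%:R : R) - 2.
  apply: (lt_le_trans (archi_boundP _)).
    by apply: divr_ge0; [apply: mulr_ge0 => //; lra| exact: ltW].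
  by rewrite lerBrDr -natrD ler_nat addn2.
have H5 : c * ln M <= e / 2 * (n.+1%:R - 2).
  move: H4; rewrite ltr_pdivrMr // => H4.
  have -> : e / 2 * (n.+1%:R - 2) = ((n.+1%:R - 2) * e) / 2 by field.
  lra.
have E3 : (n.+3%:R : R) = n.+1%:R + 2 by rewrite -!natr1; ring.
rewrite E3 in H3.
nra.
Qed.

End Analysis.

Section Prob.
Context {R : realType} {d : measure_display} {Omega : measurableType d}
  (P : probability Omega R).

Definition pr {T : finType} (X : Omega -> T) (t : T) : R :=
  fine (P (X @^-1` [set t])).
Definition mvar {T : finType} (X : Omega -> T) : Prop :=
  forall t, measurable (X @^-1` [set t]).

Lemma entropyE {T : finType} (X : Omega -> T) :
  entropy P X = - \sum_t pr X t * log2 (pr X t).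
Proof. by []. Qed.

Lemma mvar_seq {T : finType} (X : Omega -> T) (s : seq T) : mvar X -> uniq s ->
  measurable [set w | X w \in s] /\
  P [set w | X w \in s] = (\sum_(t <- s) P (X @^-1` [set t]))%E.
Proof.
move=> mX; elim: s => [|t s IH] /=.
  have -> : [set w | X w \in [::]] = set0 by apply/seteqP; split => w //=.
  by rewrite big_nil measure0.
move=> /andP[ts us]; have [ms Ps] := IH us.
have E : [set w | X w \in t :: s] = X @^-1` [set t] `|` [set w | X w \in s].
  apply/seteqP; split => w /=; rewrite in_cons.
    by case/orP => [/eqP ->|]; [left|right].
  by case => [->|->]; rewrite ?eqxx ?orbT.
rewrite E; split; first exact: measurableU.
rewrite measureU //; last first.
  apply/seteqP; split => w //= [Xw Xs]; move: ts; rewrite -Xw; by rewrite Xs.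
by rewrite big_cons -Ps.
Qed.

Lemma mvar_pred {T : finType} (X : Omega -> T) (Q : pred T) : mvar X ->
  measurable [set w | Q (X w)] /\
  P [set w | Q (X w)] = (\sum_(t | Q t) P (X @^-1` [set t]))%E.
Proof.
move=> mX.
have E : [set w | Q (X w)] = [set w | X w \in [seq t <- enum T | Q t]].
  by apply/seteqP; split => w /=; rewrite mem_filter mem_enum andbT.
have [m1 P1] := mvar_seq X _ mX (filter_uniq Q (enum_uniq T)).
by rewrite E; split => //; rewrite P1 big_filter big_enum_cond.
Qed.

Lemma fin_P (A : set Omega) : measurable A -> P A \is a fin_num.
Proof. by move=> mA; apply: fin_num_measure. Qed.

Lemma pr_ge0 {T : finType} (X : Omega -> T) t : 0 <= pr X t.
Proof. by apply: fine_ge0; apply: measure_ge0. Qed.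

Lemma pr_le1 {T : finType} (X : Omega -> T) t : mvar X -> pr X t <= 1.
Proof.
move=> mX; rewrite /pr -lee_fin fineK; last exact: fin_P.
exact: probability_le1.
Qed.

Lemma pr_comp {T U : finType} (X : Omega -> T) (f : T -> U) u : mvar X ->
  pr (f \o X) u = \sum_(t | f t == u) pr X t.
Proof.
move=> mX; rewrite /pr.
have E : (f \o X) @^-1` [set u] = [set w | (fun t => f t == u) (X w)].
  by apply/seteqP; split => w /= => [->|/eqP]. 
have [m1 P1] := mvar_pred X (fun t => f t == u) mX.
rewrite E P1 sum_fine //= => t _; exact: fin_P.
Qed.

Lemma mvar_comp {T U : finType} (X : Omega -> T) (f : T -> U) : mvar X -> mvar (f \o X).
Proof.
move=> mX u.
have E : (f \o X) @^-1` [set u] = [set w | (fun t => f t == u) (X w)].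
  by apply/seteqP; split => w /= => [->|/eqP]. 
by rewrite E; have [] := mvar_pred X (fun t => f t == u) mX.
Qed.

Lemma pr_sum1 {T : finType} (X : Omega -> T) : mvar X -> \sum_t pr X t = 1.
Proof.
move=> mX; have := pr_comp X (fun _ => tt) tt mX.
rewrite /pr.
have -> : ((fun _ : T => tt) \o X) @^-1` [set tt] = setT.
  by apply/seteqP; split => w //=.
rewrite probability_setT /= => ->; by apply: eq_bigl => t.
Qed.

Lemma mvar_pair {T U : finType} (X : Omega -> T) (Y : Omega -> U) :
  mvar X -> mvar Y -> mvar (fun w => (X w, Y w)).
Proof.
move=> mX mY [a b].
have -> : (fun w => (X w, Y w)) @^-1` [set (a, b)] = X @^-1` [set a] `&` Y @^-1` [set b].
  apply/seteqP; split => w /=; first by case=> -> ->.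
  by case=> -> ->.
exact: measurableI.
Qed.

Lemma pr_le_comp {T U : finType} (X : Omega -> T) (f : T -> U) t : mvar X ->
  pr X t <= pr (f \o X) (f t).
Proof.
move=> mX; rewrite pr_comp // (bigD1 t) //= lerDl.
by apply: sumr_ge0 => i _; exact: pr_ge0.
Qed.

End Prob.

Section Ent.
Context {R : realType} {d : measure_display} {Omega : measurableType d}
  (P : probability Omega R).

Lemma ln2_gt0 : 0 < ln (2 : R).
Proof. by apply: ln_gt0; rewrite ltr1n. Qed.

Lemma log2E (x : R) : log2 x = ln x / ln 2.
Proof. by []. Qed.

Lemma term_gibbs (p q : R) : 0 <= p -> 0 <= q -> (0 < p -> 0 < q) ->
  p * ln q - p * ln p <= q - p.
Proof.
move=> p0 q0 pq; have [->|pp] := eqVneq p 0; first by rewrite !mul0r subrr subr0.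
have p1 : 0 < p by rewrite lt_def pp.
have q1 := pq p1.
have h : -1 < q / p - 1 by rewrite ltrBrDr addrC subrr divr_gt0.
have := le_ln1Dx h; rewrite addrC subrK ln_div ?posrE // => H.
have := ler_wpM2l p0 H.
have -> : p * (q / p - 1) = q - p by field.
by rewrite mulrBr.
Qed.

Lemma entropy_ext {T : finType} (X Y : Omega -> T) : (forall w, X w = Y w) ->
  entropy P X = entropy P Y.
Proof. by move=> h; have -> : X = Y by apply: funext. Qed.

Lemma gibbs {T : finType} (X : Omega -> T) (q : T -> R) : mvar X ->
  (forall t, 0 <= q t) -> \sum_t q t <= 1 -> (forall t, 0 < pr P X t -> 0 < q t) ->
  entropy P X <= - \sum_t pr P X t * log2 (q t).
Proof.
move=> mX q0 q1 qp; rewrite entropyE lerN2 -subr_le0.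
rewrite -sumrB.
apply: (@le_trans _ _ (\sum_t (q t - pr P X t) / ln 2)).
  apply: ler_sum => t _; rewrite !log2E !mulrA -mulrBl.
  apply: ler_wpM2r; first by rewrite invr_ge0; exact: (ltW ln2_gt0).
  by apply: term_gibbs; [exact: pr_ge0| exact: q0| exact: qp].
rewrite -mulr_suml sumrB pr_sum1 //.
apply: mulr_le0_ge0; first lra.
by rewrite invr_ge0; exact: (ltW ln2_gt0).
Qed.

Lemma cross {T U : finType} (X : Omega -> T) (f : T -> U) : mvar X ->
  \sum_t pr P X t * log2 (pr P (f \o X) (f t)) =
  \sum_u pr P (f \o X) u * log2 (pr P (f \o X) u).
Proof.
move=> mX.
under [RHS]eq_bigr => u _ do rewrite {1}(pr_comp P X f _ mX) mulr_suml.
rewrite (partition_big f predT) //=.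
apply: eq_bigr => u _; apply: eq_bigr => t /eqP <-; by [].
Qed.

Lemma ent_comp {T U : finType} (X : Omega -> T) (f : T -> U) : mvar X ->
  entropy P (f \o X) <= entropy P X.
Proof.
move=> mX; rewrite !entropyE lerN2 -(cross X f mX).
apply: ler_sum => t _.
have [->|pp] := eqVneq (pr P X t) 0; first by rewrite !mul0r.
have p1 : 0 < pr P X t by rewrite lt_def pp pr_ge0.
have le := pr_le_comp P X f t mX.
apply: ler_wpM2l; first exact: pr_ge0.
rewrite !log2E; apply: ler_wpM2r; first by rewrite invr_ge0; exact: (ltW ln2_gt0).
by rewrite ler_ln // posrE (lt_le_trans p1).
Qed.

Lemma ent_funof {T U : finType} (X : Omega -> T) (Y : Omega -> U) (g : U -> T) :
  mvar Y -> (forall w, X w = g (Y w)) -> entropy P X <= entropy P Y.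
Proof.
move=> mY h; rewrite (entropy_ext X (g \o Y)) //; exact: ent_comp.
Qed.

Lemma entropy_ge0 {T : finType} (X : Omega -> T) : mvar X -> 0 <= entropy P X.
Proof.
move=> mX; rewrite entropyE oppr_ge0; apply: sumr_le0 => t _.
apply: mulr_ge0_le0; first exact: pr_ge0.
rewrite log2E; apply: mulr_le0_ge0; first by apply: ln_le0; exact: (pr_le1 P X t mX).
by rewrite invr_ge0; exact: (ltW ln2_gt0).
Qed.

Lemma ent_ub {T : finType} (X : Omega -> T) : mvar X ->
  entropy P X <= log2 (#|T|%:R).
Proof.
move=> mX.
have T0 : (0 < #|T|)%N by apply/card_gt0P; exists (X point).
have N0 : 0 < #|T|%:R :> R by rewrite ltr0n.
apply: (le_trans (gibbs X (fun _ => #|T|%:R^-1) mX _ _ _)).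
- by move=> t; rewrite invr_ge0 ltW.
- rewrite sumr_const (_ : #|xpredT| = #|T|) // -(mulr_natr (#|T|%:R^-1)) mulVf //.
  by rewrite gt_eqF.
- by move=> t _; rewrite invr_gt0.
rewrite -mulr_suml pr_sum1 // mul1r log2E lnV ?posrE // mulNr opprK.
by [].
Qed.

Lemma ent_pair {T U : finType} (X : Omega -> T) (Y : Omega -> U) :
  mvar X -> mvar Y ->
  entropy P (fun w => (X w, Y w)) <= entropy P X + entropy P Y.
Proof.
move=> mX mY.
set Z := fun w => (X w, Y w).
have mZ : mvar Z by exact: mvar_pair.
have eX : pr P (fst \o Z) = pr P X by [].
have eY : pr P (snd \o Z) = pr P Y by [].
have cX := cross Z fst mZ; rewrite eX in cX.
have cY := cross Z snd mZ; rewrite eY in cY.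
have lX : forall t, pr P Z t <= pr P X t.1.
  by move=> t; rewrite -eX; exact: pr_le_comp.
have lY : forall t, pr P Z t <= pr P Y t.2.
  by move=> t; rewrite -eY; exact: pr_le_comp.
apply: (le_trans (gibbs Z (fun t => pr P X t.1 * pr P Y t.2) mZ _ _ _)).
- by move=> t; apply: mulr_ge0; exact: pr_ge0.
- rewrite -(pair_bigA _ (fun a b => pr P X a * pr P Y b)) /=.
  under eq_bigr => a _ do rewrite -mulr_sumr.
  by rewrite -mulr_suml !pr_sum1 // mul1r.
- move=> t pt; apply: mulr_gt0; [exact: lt_le_trans pt (lX t)|exact: lt_le_trans pt (lY t)].
rewrite !entropyE -cX -cY -opprD lerN2 -big_split /=.
rewrite le_eqVlt; apply/orP; left; apply/eqP.
apply: eq_bigr => t _.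
have [->|pp] := eqVneq (pr P Z t) 0; first by rewrite !mul0r addr0.
have p1 : 0 < pr P Z t by rewrite lt_def pp pr_ge0.
rewrite -mulrDr !log2E -mulrDl lnM // posrE.
  exact: lt_le_trans p1 (lX t).
exact: lt_le_trans p1 (lY t).
Qed.

End Ent.

Lemma bigU_mem {T : Type} {I : eqType} (s : seq I) (P : pred I) (F : I -> set T) x :
  (\big[setU/set0]_(i <- s | P i) F i) x <-> exists2 i, (i \in s) && P i & F i x.
Proof.
elim: s => [|i s IH]; first by rewrite big_nil; split => // [[]].
rewrite big_cons; case: ifP => Pi.
  split.
    case=> [Fx|/IH [j /andP[js Pj] Fj]]; first by exists i; rewrite ?mem_head.
    by exists j => //; rewrite in_cons js orbT.
  case=> j /andP[]; rewrite in_cons => /orP[/eqP ->|js] Pj Fj; first by left.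
  by right; apply/IH; exists j; rewrite ?js.
rewrite IH; split; case=> j /andP[js Pj] Fj.
  by exists j => //; rewrite in_cons js orbT.
move: js; rewrite in_cons => /orP[/eqP ji|js]; first by rewrite ji Pi in Pj.
by exists j; rewrite ?js.
Qed.

Lemma bigI_mem {T : Type} {I : eqType} (s : seq I) (P : pred I) (F : I -> set T) x :
  (\big[setI/setT]_(i <- s | P i) F i) x <-> forall i, i \in s -> P i -> F i x.
Proof.
elim: s => [|i s IH]; first by rewrite big_nil; split.
rewrite big_cons; case: ifP => Pi.
  split.
    case=> Fx /IH H j; rewrite in_cons => /orP[/eqP ->//|js]; exact: H.
  move=> H; split; first by apply: H; rewrite ?mem_head.
  by apply/IH => j js; apply: H; rewrite in_cons js orbT.
rewrite IH; split => H j.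
  rewrite in_cons => /orP[/eqP ->|js]; [by rewrite Pi | exact: H].
by move=> js; apply: H; rewrite in_cons js orbT.
Qed.

Section SM.
Context {A : Type}.
Implicit Types X Y : set (nat -> A).

Lemma sm0 : seq_measurable (@set0 (nat -> A)).
Proof. exact: sigma_algebra0. Qed.

Lemma smC X : seq_measurable X -> seq_measurable (~` X).
Proof. by move=> h; rewrite -setTD; exact: sigma_algebraCD. Qed.

Lemma smT : seq_measurable (@setT (nat -> A)).
Proof. by rewrite -setC0; apply: smC; exact: sm0. Qed.

Lemma smU X Y : seq_measurable X -> seq_measurable Y -> seq_measurable (X `|` Y).
Proof.
move=> hX hY; rewrite -bigcup2E; apply: sigma_algebra_bigcup => i.
rewrite /bigcup2; case: ifP => _ //; case: ifP => _ //; exact: sm0.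
Qed.

Lemma smI X Y : seq_measurable X -> seq_measurable Y -> seq_measurable (X `&` Y).
Proof.
move=> hX hY; rewrite -[X `&` Y]setCK setCI; apply: smC; apply: smU; exact: smC.
Qed.

Lemma smBU {I : Type} (s : seq I) (P : pred I) (F : I -> set (nat -> A)) :
  (forall i, P i -> seq_measurable (F i)) ->
  seq_measurable (\big[setU/set0]_(i <- s | P i) F i).
Proof. by move=> h; elim/big_ind: _ => //; [exact: sm0|exact: smU]. Qed.

Lemma smBI {I : Type} (s : seq I) (P : pred I) (F : I -> set (nat -> A)) :
  (forall i, P i -> seq_measurable (F i)) ->
  seq_measurable (\big[setI/setT]_(i <- s | P i) F i).
Proof. by move=> h; elim/big_ind: _ => //; [exact: smT|exact: smI]. Qed.

End SM.

Lemma sm_coord {A : finType} (j : nat) (a : A) :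
  seq_measurable [set x : nat -> A | x j = a].
Proof.
have -> : [set x : nat -> A | x j = a] =
  \big[setU/set0]_(u : {ffun 'I_j.+1 -> A} | u ord_max == a)
     [set x : nat -> A | forall i : 'I_j.+1, x i = u i].
  apply/seteqP; split => x /=.
    move=> xj; apply/bigU_mem; exists [ffun i : 'I_j.+1 => x i].
      by rewrite mem_index_enum /= ffunE; apply/eqP.
    by move=> i; rewrite ffunE.
  move/bigU_mem => [u /andP[_ /eqP <-] H]; exact: (H ord_max).
apply: smBU => u _; apply: sub_gen_smallest.
by exists j.+1, u.
Qed.

Lemma sm_window {A : finType} (m n : nat) (z : 'I_n -> A) :
  seq_measurable [set x : nat -> A | forall i : 'I_n, x (m + i)%N = z i].
Proof.
have -> : [set x : nat -> A | forall i : 'I_n, x (m + i)%N = z i] =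
  \big[setI/setT]_(i : 'I_n) [set x : nat -> A | x (m + i)%N = z i].
  apply/seteqP; split => x /=.
    by move=> H; apply/bigI_mem => i _ _; exact: H.
  by move/bigI_mem => H i; apply: H => //; rewrite mem_index_enum.
apply: smBI => i _; exact: sm_coord.
Qed.

Section Stat.
Context {R : realType} {d : measure_display} {Omega : measurableType d}
  (P : probability Omega R) {A : finType}.

Definition win (S : nat -> Omega -> A) (m n : nat) (w : Omega) : {ffun 'I_n -> A} :=
  [ffun i : 'I_n => S (m + i)%N w].

Lemma mvar_ffun {n : nat} (F : 'I_n -> Omega -> A) :
  (forall i, mvar (F i)) -> mvar (fun w => [ffun i => F i w]).
Proof.
move=> mF z.
have -> : (fun w => [ffun i => F i w]) @^-1` [set z] =
    \big[setI/setT]_(i : 'I_n) (F i @^-1` [set z i]).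
  apply/seteqP; split => w /=.
    move=> <-; apply/bigI_mem => i _ _ /=; by rewrite ffunE.
  move/bigI_mem => H; apply/ffunP => i; rewrite ffunE; apply: H => //.
  by rewrite mem_index_enum.
by apply: bigsetI_measurable => i _; exact: mF.
Qed.

Lemma mvar_sym (S : nat -> Omega -> A) n : is_source S -> mvar (sym_word S n).
Proof. by move=> hS; apply: (mvar_ffun (fun i : 'I_n => S i)) => i a; exact: hS. Qed.

Lemma mvar_win (S : nat -> Omega -> A) m n : is_source S -> mvar (win S m n).
Proof. by move=> hS; apply: (mvar_ffun (fun i : 'I_n => S (m + i)%N)) => i a; exact: hS. Qed.

Lemma stat_shift (S : nat -> Omega -> A) (n : nat) (z : 'I_n -> A) :
  stationary P S -> forall m,
  P [set w | forall i : 'I_n, S (m + i)%N w = z i] =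
  P [set w | forall i : 'I_n, S i w = z i].
Proof.
move=> hst; elim=> [|m IH]; first by [].
rewrite -IH.
have -> : [set w | forall i : 'I_n, S (m.+1 + i)%N w = z i] =
  [set w | [set x : nat -> A | forall i : 'I_n, x (m + i)%N = z i]
             (Defs.shift (path_of S w))] by [].
by rewrite hst //; exact: sm_window.
Qed.

Lemma pr_win (S : nat -> Omega -> A) m n z : stationary P S ->
  pr P (win S m n) z = pr P (sym_word S n) z.
Proof.
move=> hst; rewrite /pr.
have -> : win S m n @^-1` [set z] = [set w | forall i : 'I_n, S (m + i)%N w = z i].
  apply/seteqP; split => w /=.
    by move=> <- i; rewrite ffunE.
  by move=> H; apply/ffunP => i; rewrite ffunE.
have -> : sym_word S n @^-1` [set z] = [set w | forall i : 'I_n, S i w = z i].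
  apply/seteqP; split => w /=.
    by move=> <- i; rewrite ffunE.
  by move=> H; apply/ffunP => i; rewrite ffunE.
by rewrite stat_shift.
Qed.

Lemma ent_win (S : nat -> Omega -> A) m n : stationary P S ->
  entropy P (win S m n) = entropy P (sym_word S n).
Proof.
by move=> hst; rewrite !entropyE; congr (- _); apply: eq_bigr => z _; rewrite pr_win.
Qed.

End Stat.

Local Close Scope ring_scope.

Section Comb.
Context {disp : Order.disp_t} {A : finOrderType disp} (a0 : A).

Definition rk (x : nat -> A) (k : nat) : nat := #|[set i : 'I_k.+1 | (x i <= x k)%O]|.

Definition rkF {L} (x : {ffun 'I_L -> A}) : {ffun 'I_L -> 'I_L.+1} :=
  [ffun i : 'I_L => inord (rk (nth a0 (fgraph x)) i)].

Definition fo {L} (x : {ffun 'I_L -> A}) : {ffun A -> 'I_L.+1} :=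
  [ffun a => inord (index a (fgraph x))].

Lemma rkE x k : rk x k = #|[pred i : 'I_k.+1 | (x i <= x k)%O]|.
Proof. apply: eq_card => i; rewrite inE /=; apply/idP/idP; rewrite in_setE //. Qed.

Lemma rk_le x k : (rk x k <= k.+1)%N.
Proof. by rewrite /rk; apply: leq_trans (max_card _) _; rewrite card_ord. Qed.

Lemma rk_key (xs ys : nat -> A) n j : (forall m, (m < n)%N -> xs m = ys m) ->
  (j < n)%N -> ys j = ys n -> (xs n < ys n)%O -> (rk xs n < rk ys n)%N.
Proof.
move=> hm jn yj lt; rewrite !rkE; apply: proper_card; apply/properP; split.
  apply/fintype.subsetP => i; rewrite !inE => xi.
  have := ltn_ord i; rewrite ltnS leq_eqVlt => /orP[/eqP ieq|ilt]; first by rewrite ieq.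
  by rewrite -hm // (le_trans xi) // ltW.
have jn1 : (j < n.+1)%N by apply: ltnW.
exists (Ordinal jn1); rewrite !inE /=.
  by rewrite le_eqVlt; apply/orP; left; apply/eqP.
rewrite -ltNge; move: yj; rewrite -hm // => ->; exact: lt.
Qed.

Lemma size_fg L (x : {ffun 'I_L -> A}) : size (fgraph x) = L.
Proof. by rewrite size_tuple card_ord. Qed.

Lemma inj_rf L (x y : {ffun 'I_L -> A}) : rkF x = rkF y -> fo x = fo y -> x = y.
Proof.
move=> hR hF.
set sx := fgraph x; set sy := fgraph y.
set xs := nth a0 sx; set ys := nth a0 sy.
have szx : size sx = L by exact: size_fg.
have szy : size sy = L by exact: size_fg.
have hr : forall n, (n < L)%N -> rk xs n = rk ys n.
  move=> n nL; have := congr1 (fun f : {ffun 'I_L -> 'I_L.+1} => nat_of_ord (f (Ordinal nL))) hR.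
  rewrite !ffunE /= !inordK //; apply: leq_ltn_trans (rk_le _ _) _; by rewrite ltnS.
have hf : forall a, index a sx = index a sy.
  move=> a; have := congr1 (fun f : {ffun A -> 'I_L.+1} => nat_of_ord (f a)) hF.
  have isz : forall (z : {ffun 'I_L -> A}) a, (index a (fgraph z) < L.+1)%N.
    by move=> z b; rewrite ltnS; apply: leq_trans (index_size _ _) _; rewrite size_fg.
  by rewrite !ffunE !inordK ?isz.
have main : forall n, (n < L)%N -> xs n = ys n.
  elim/ltn_ind => n IH nL.
  have IH' : forall m, (m < n)%N -> xs m = ys m.
    by move=> m mn; apply: IH => //; apply: ltn_trans nL.
  have ixl : (index (xs n) sx <= n)%N by apply: index_nth; rewrite szx.
  have iyl : (index (ys n) sy <= n)%N by apply: index_nth; rewrite szy.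
  have xin : xs n \in sx by apply: mem_nth; rewrite szx.
  have yin : ys n \in sy by apply: mem_nth; rewrite szy.
  case: (eqVneq (index (xs n) sx) n) => [ex|nex].
    have ey : index (xs n) sy = n by rewrite -hf.
    have : xs n \in sy by rewrite -index_mem ey szy.
    by move/(nth_index a0); rewrite ey.
  case: (eqVneq (index (ys n) sy) n) => [ey|ney].
    have ex : index (ys n) sx = n by rewrite hf.
    have : ys n \in sx by rewrite -index_mem ex szx.
    by move/(nth_index a0); rewrite ex.
  have ilt : (index (xs n) sx < n)%N by rewrite ltn_neqAle nex.
  have jlt : (index (ys n) sy < n)%N by rewrite ltn_neqAle ney.
  have xi : xs (index (xs n) sx) = xs n by exact: nth_index.
  have yj : ys (index (ys n) sy) = ys n by exact: nth_index.
  case: (ltgtP (xs n) (ys n)) => // [lt|lt].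
    have := rk_key _ _ _ _ IH' jlt yj lt; by rewrite hr // ltnn.
  have IH'' : forall m, (m < n)%N -> ys m = xs m by move=> m mn; rewrite IH'.
  have := rk_key _ _ _ _ IH'' ilt xi lt; by rewrite hr // ltnn.
apply/ffunP => i; have := main i (ltn_ord i).
by rewrite /xs /ys !nth_fgraph_ord.
Qed.

End Comb.

Local Open Scope ring_scope.

Lemma final_rank {R : realType} (a r : nat -> R) (h c : R) :
  (forall n, 0 <= a n) ->
  (forall n, h <= a n.+1 / n.+1%:R) ->
  (forall e : R, 0 < e -> exists N : nat, forall n, (N <= n)%N -> a n.+1 / n.+1%:R <= h + e) ->
  0 <= c ->
  (forall n, r n <= a n) ->
  (forall n, a n <= r n + c * ln (n.+1%:R)) ->
  forall e : R, 0 < e -> exists N : nat, forall L, (N <= L)%N ->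
    `|r L.+2 / L.+1%:R - h| <= e.
Proof.
move=> a0 hlow hup c0 hra har e e0.
have e20 : 0 < e / 2 by lra.
have [N1 H1] := hup 1 ltr01.
have [N2 H2] := hup _ e20.
have [N3 H3] := ln_small c e c0 e0.
have hp : 0 <= h + 1.
  apply: le_trans (H1 N1 (leqnn _)); apply: divr_ge0 => //.
pose N4 := Num.Def.archi_bound (2 * (h + 1) / e).
exists (N1 + N2 + N3 + N4)%N => L NL.
have L1 : (N1 <= L.+1)%N by lia.
have L2 : (N2 <= L.+1)%N by lia.
have L3 : (N3 <= L)%N by lia.
have L4 : (N4 <= L)%N by lia.
set x := (L.+1%:R : R).
have x0 : 0 < x by rewrite ltr0n.
have xe : (L.+2%:R : R) = x + 1 by rewrite -natr1.
set v := a L.+2 / L.+2%:R.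
have vlo : h <= v := hlow L.+1.
have vup : v <= h + e / 2 := H2 _ L2.
have vup1 : v <= h + 1 := H1 _ L1.
have v0 : 0 <= v by apply: divr_ge0.
have Av : a L.+2 = v * (x + 1).
  by rewrite /v -xe mulrVK // unitfE pnatr_eq0.
have F4 : 2 * (h + 1) / e < x.
  apply: (lt_le_trans (archi_boundP _)).
    by apply: divr_ge0; [lra|exact: ltW].
  by rewrite /x ler_nat; apply: leqW.
have F4' : h + 1 <= e / 2 * x.
  move: F4; rewrite ltr_pdivrMr // => F4.
  have : 2 * (h + 1) <= 2 * (e / 2 * x).
    rewrite (_ : 2 * (e / 2 * x) = x * e); last by field.
    exact: ltW.
  by rewrite ler_pM2l //; lra.
have F6 : a L.+2 <= r L.+2 + e * x.
  apply: (le_trans (har _)); rewrite lerD2l; exact: H3.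
have F5 := hra L.+2.
have vx1 : v * x <= (h + e / 2) * x by apply: ler_wpM2r => //; exact: ltW.
have vx2 : h * x <= v * x by apply: ler_wpM2r => //; exact: ltW.
rewrite Av in F6 F5.
rewrite ler_norml; apply/andP; split.
  rewrite lerBrDr ler_pdivlMr //; nra.
rewrite lerBlDr ler_pdivrMr //; nra.
Qed.

Section Main.
Context {R : realType} {d : measure_display} {Omega : measurableType d}
  (P : probability Omega R) {disp : Order.disp_t} {A : finOrderType disp}
  (S : nat -> Omega -> A) (hS : is_source S) (hst : stationary P S).

Let a0 : A := S 0%N (@point Omega).

Lemma nth_sym L w k (kL : (k < L)%N) : nth a0 (fgraph (sym_word S L w)) k = S k w.
Proof. by have := nth_fgraph_ord a0 (Ordinal kL) (sym_word S L w); rewrite ffunE. Qed.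

Lemma rank_fun L w : rank_word S L w = rkF a0 (sym_word S L w).
Proof.
apply/ffunP => i; rewrite !ffunE; congr inord.
rewrite /rank /rk; apply: eq_card => j.
have jL : (j < L)%N by apply: leq_trans (ltn_ord j) (ltn_ord i).
by apply/idP/idP; rewrite !in_setE /= !nth_sym.
Qed.

Lemma sym_subadd m n : entropy P (sym_word S (m + n)) <=
  entropy P (sym_word S m) + entropy P (sym_word S n).
Proof.
pose g (p : {ffun 'I_m -> A} * {ffun 'I_n -> A}) : {ffun 'I_(m + n) -> A} :=
  [ffun i : 'I_(m + n) => match fintype.split i with inl j => p.1 j | inr k => p.2 k end].
have mY : mvar (fun w => (sym_word S m w, win S m n w)).
  by apply: mvar_pair; [exact: mvar_sym | exact: mvar_win].
apply: (le_trans (ent_funof P _ _ g mY _)).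
  move=> w; apply/ffunP => i; rewrite !ffunE.
  case: splitP => j ->; by rewrite ffunE.
rewrite -(ent_win P S m n hst); apply: (ent_pair P (sym_word S m) (win S m n)); [exact: mvar_sym|exact: mvar_win].
Qed.

Lemma rank_le_sym L : entropy P (rank_word S L) <= entropy P (sym_word S L).
Proof.
apply: (ent_funof P _ _ (rkF a0)); first exact: mvar_sym.
exact: rank_fun.
Qed.

Lemma sym_le_rank L : entropy P (sym_word S L) <=
  entropy P (rank_word S L) + #|A|%:R * log2 (L.+1%:R).
Proof.
set x0 := sym_word S L (@point Omega).
pose g (p : {ffun 'I_L -> 'I_L.+1} * {ffun A -> 'I_L.+1}) : {ffun 'I_L -> A} :=
  if [pick x | (rkF a0 x, fo x) == p] is Some x then x else x0.
have mR : mvar (rank_word S L).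
  have -> : rank_word S L = rkF a0 \o sym_word S L by apply: funext => w; exact: rank_fun.
  by apply: (mvar_comp P); exact: mvar_sym.
have mF : mvar (fo \o sym_word S L) by apply: (mvar_comp P); exact: mvar_sym.
have mY : mvar (fun w => (rank_word S L w, (fo \o sym_word S L) w)).
  exact: mvar_pair.
apply: (le_trans (ent_funof P _ _ g mY _)).
  move=> w; rewrite /g rank_fun /=.
  case: pickP => [y /eqP [h1 h2]|H]; first by apply: (inj_rf a0).
  by have := H (sym_word S L w); rewrite eqxx.
apply: (le_trans (ent_pair P _ _ mR mF)); rewrite lerD2l.
apply: (le_trans (ent_ub P _ mF)).
rewrite card_ffun card_ord natrX !log2E lnXn ?ltr0n // mulr_natl mulrnAl.
by [].
Qed.

End Main.

Theorem theorem1 (R : realType) (d : measure_display) (Omega : measurableType d)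
  (P : probability Omega R) (disp : Order.disp_t) (A : finOrderType disp)
  (S : nat -> Omega -> A) :
  is_source S -> stationary P S -> ergodic P S ->
  exists h : R,
    (fun L : nat => entropy P (rank_word S L.+2) / L.+1%:R) @ \oo --> h /\
    (fun L : nat => entropy P (sym_word S L.+1) / L.+1%:R) @ \oo --> h.
Proof.
move=> hS hst _.
pose a n := entropy P (sym_word S n).
pose r n := entropy P (rank_word S n).
have a0 : forall n, 0 <= a n.
  by move=> n; apply: entropy_ge0; exact: mvar_sym.
have sub : forall m n, a (m + n)%N <= a m + a n.
  by move=> m n; exact: (sym_subadd P S hS hst).
have [h [hlow hup]] := fekete a a0 sub.
exists h; split.
  apply: cvg_eps.
  have c0 : 0 <= #|A|%:R / ln (2 : R).
    by apply: divr_ge0; [exact: ler0n | exact: (ltW ln2_gt0)].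
  apply: (final_rank a r h _ a0 hlow hup c0).
    by move=> n; exact: (rank_le_sym P S hS).
  move=> n; apply: (le_trans (sym_le_rank P S hS n)).
  by rewrite log2E mulrA mulrAC.
apply: cvg_eps => e e0; have [N HN] := hup e e0; exists N => n Nn.
rewrite ler_norml; apply/andP; split.
  have := hlow n; rewrite /a; set v := (_ / _) => H; lra.
have := HN n Nn; rewrite /a; set v := (_ / _) => H; lra.
Qed.
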